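(* (1) Let $f_1:G_1\to H_1$ and $f_2:G_2\to H_2$ be group homomorphisms and let $f_1\times f_2:G_1\times G_2\to H_1\times H_2$ be $(a_1,a_2)\mapsto (f_1(a_1),f_2(a_2))$. If $f_1$ does not admit a global section, then $\mathrm{sec}(f_1)\leq \mathrm{sec}(f_1\times f_2)$; likewise, if $f_2$ does not admit a global section, then $\mathrm{sec}(f_2)\leq \mathrm{sec}(f_1\times f_2)$. (2) Let $f:G\to H$ be a group homomorphism and $K$ a group. Then $\mathrm{sec}(f\times\mathrm{id}_K)\leq \mathrm{sec}(f)$, with equality whenever $f$ does not admit a global section.
   Context: For a homomorphism $f:G\to H$ and a subgroup $L\le H$, a local section of $f$ on $L$ is a homomorphism $s:L\to G$ with $f\circ s=\mathrm{incl}_L$ (the inclusion $L\hookrightarrow H$); a global section is a local section on $L=H$. The sectional number $\mathrm{sec}(f)$ is the least positive integer $m$ such that there exist proper subgroups $H_1,\ldots,H_m$ of $H$ with $H=H_1\cup\cdots\cup H_m$ and such that $f$ admits a local section on each $H_i$; $\mathrm{sec}(f)=\infty$ if no such $m$ exists. *)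

(* Defs.v *)
From Stdlib Require Import Arith Lia Classical ClassicalEpsilon.

Set Implicit Arguments.

(* A group: carrier, multiplication, unit, inverse; left unit and left
   inverse axioms (standard equivalent axiomatization of groups). *)
Record group := Group {
  gcar :> Type;
  gmul : gcar -> gcar -> gcar;
  gone : gcar;
  ginv : gcar -> gcar;
  gassoc : forall x y z, gmul x (gmul y z) = gmul (gmul x y) z;
  gmul1 : forall x, gmul gone x = x;
  gmulV : forall x, gmul (ginv x) x = gone }.

Arguments gmul {g}. Arguments gone {g}. Arguments ginv {g}.

Record hom (G H : group) := Hom {
  hfun :> G -> H;
  hmul : forall x y, hfun (gmul x y) = gmul (hfun x) (hfun y) }.

Definition subgroup (H : group) (L : H -> Prop) : Prop :=
  L gone /\ (forall x y, L x -> L y -> L (gmul x y)) /\ (forall x, L x -> L (ginv x)).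

Definition proper (H : group) (L : H -> Prop) : Prop := exists h, ~ L h.

(* A local section of f on L: a homomorphism s : L -> G with f o s = incl_L.
   It is represented by a function on H whose behaviour is only constrained on L. *)
Definition local_section (G H : group) (f : hom G H) (L : H -> Prop) : Prop :=
  exists s : H -> G,
    (forall x y, L x -> L y -> s (gmul x y) = gmul (s x) (s y)) /\
    (forall x, L x -> f (s x) = x).

Definition global_section (G H : group) (f : hom G H) : Prop :=
  local_section f (fun _ => True).

Definition sec_cover (G H : group) (f : hom G H) (m : nat) : Prop :=
  0 < m /\
  exists Hs : nat -> H -> Prop,
    (forall i, i < m -> @subgroup H (Hs i) /\ @proper H (Hs i) /\ local_section f (Hs i)) /\
    (forall h : H, exists i, i < m /\ Hs i h).

(* Extended naturals: None stands for infinity. *)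
Definition enat := option nat.
Definition ele (a b : enat) : Prop :=
  match a, b with
  | _, None => True
  | None, Some _ => False
  | Some x, Some y => x <= y
  end.

Lemma least_exists (P : nat -> Prop) :
  (exists m, P m) -> exists m, P m /\ forall k, P k -> m <= k.
Proof.
  intros [m Hm].
  induction m as [m IH] using (well_founded_induction lt_wf).
  destruct (classic (exists k, P k /\ k < m)) as [[k [Hk Hlt]]|Hn].
  - exact (IH k Hlt Hk).
  - exists m; split; [exact Hm|].
    intros k Hk. destruct (le_lt_dec m k) as [|Hlt]; [assumption|].
    exfalso; apply Hn; eauto.
Qed.

Definition sec (G H : group) (f : hom G H) : enat :=
  match excluded_middle_informative (exists m, sec_cover f m) with
  | left E => Some (proj1_sig (constructive_indefinite_description _ (@least_exists (sec_cover f) E)))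
  | right _ => None
  end.

Section Prod.
Variables G1 G2 : group.
Definition pmul (x y : G1 * G2) : G1 * G2 := (gmul (fst x) (fst y), gmul (snd x) (snd y)).
Lemma pmulA x y z : pmul x (pmul y z) = pmul (pmul x y) z.
Proof. destruct x, y, z; unfold pmul; simpl; now rewrite !gassoc. Qed.
Lemma pmul1 x : pmul (gone, gone) x = x.
Proof. destruct x; unfold pmul; simpl; now rewrite !gmul1. Qed.
Lemma pmulV x : pmul (ginv (fst x), ginv (snd x)) x = (gone, gone).
Proof. destruct x; unfold pmul; simpl; now rewrite !gmulV. Qed.
Definition prod_group : group :=
  @Group (G1 * G2)%type pmul (gone, gone) (fun x => (ginv (fst x), ginv (snd x)))
         pmulA pmul1 pmulV.
End Prod.

Section ProdHom.
Variables G1 H1 G2 H2 : group.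
Variables (f1 : hom G1 H1) (f2 : hom G2 H2).
Definition prod_fun (x : prod_group G1 G2) : prod_group H1 H2 := (f1 (fst x), f2 (snd x)).
Lemma prod_fun_mul x y : prod_fun (gmul x y) = gmul (prod_fun x) (prod_fun y).
Proof. destruct x, y; unfold prod_fun; simpl; unfold pmul; simpl; now rewrite !hmul. Qed.
Definition prod_hom : hom (prod_group G1 G2) (prod_group H1 H2) := @Hom (prod_group G1 G2) (prod_group H1 H2) prod_fun prod_fun_mul.
End ProdHom.

Definition id_hom (K : group) : hom K K := @Hom K K (fun x => x) (fun _ _ => eq_refl).

(* Main.v *)
Require Import Defs.
From Stdlib Require Import Arith Lia Classical ClassicalEpsilon.

Lemma gmulVr (G : group) (x : G) : gmul x (ginv x) = gone.
Proof.
  set (y := ginv x).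
  rewrite <- (gmul1 _ (gmul x y)).
  rewrite <- (gmulV _ y) at 1.
  rewrite <- gassoc. rewrite (gassoc _ y x y).
  unfold y at 2 3. rewrite gmulV, gmul1. apply gmulV.
Qed.

Lemma gmul1r (G : group) (x : G) : gmul x gone = x.
Proof. rewrite <- (gmulV _ x), gassoc, gmulVr, gmul1. reflexivity. Qed.

Lemma ginv1 (G : group) : ginv (@gone G) = gone.
Proof. rewrite <- (gmulV _ (@gone G)) at 2. now rewrite gmul1r. Qed.

Lemma sec_le (G H : group) (f : hom G H) m : sec_cover f m -> ele (sec f) (Some m).
Proof.
  intro Hm. unfold sec.
  destruct (excluded_middle_informative _) as [E|E]; [|exfalso; eauto].
  destruct (constructive_indefinite_description _ _) as [k [Hk Hmin]]. simpl.
  apply Hmin; exact Hm.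
Qed.

Lemma not_proper_all (H : group) (M : H -> Prop) : ~ @proper H M -> forall h, M h.
Proof. intros Hn h. apply NNPP. intro. apply Hn. exists h; auto. Qed.

Lemma part1a (G1 H1 G2 H2 : group) (f1 : hom G1 H1) (f2 : hom G2 H2) m :
  ~ global_section f1 -> sec_cover (prod_hom f1 f2) m -> sec_cover f1 m.
Proof.
  intros Hng [Hm [Ls [HL Hcov]]]. split; [exact Hm|].
  exists (fun i h1 => Ls i (h1, gone)). split.
  - intros i Hi. destruct (HL i Hi) as [[A1 [A2 A3]] [Hp [s [Hs1 Hs2]]]].
    assert (Hsec : local_section f1 (fun h1 => Ls i (h1, gone))).
    { exists (fun h => fst (s (h, gone))). split.
      - intros x y Hx Hy. specialize (Hs1 (x,gone) (y,gone) Hx Hy).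
        assert (E : @gmul (prod_group H1 H2) (x,gone) (y,gone) = (gmul x y, gone))
          by (simpl; unfold pmul; simpl; now rewrite gmul1).
        rewrite E in Hs1. rewrite Hs1. reflexivity.
      - intros x Hx. specialize (Hs2 (x,gone) Hx). simpl in Hs2. unfold prod_fun in Hs2.
        injection Hs2; auto. }
    split; [|split; [|exact Hsec]].
    + split; [exact A1|split].
      * intros x y Hx Hy. specialize (A2 (x,gone) (y,gone) Hx Hy).
        simpl in A2; unfold pmul in A2; simpl in A2. now rewrite gmul1 in A2.
      * intros x Hx. specialize (A3 (x,gone) Hx). simpl in A3. now rewrite ginv1 in A3.
    + apply NNPP; intro Hn. apply Hng. destruct Hsec as [s' [B1 B2]].
      pose proof (not_proper_all _ _ Hn) as Hall.
      exists s'. split; intros; auto.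
  - intros h1. destruct (Hcov (h1, gone)) as [i [Hi Hh]]. eauto.
Qed.

Lemma part1b (G1 H1 G2 H2 : group) (f1 : hom G1 H1) (f2 : hom G2 H2) m :
  ~ global_section f2 -> sec_cover (prod_hom f1 f2) m -> sec_cover f2 m.
Proof.
  intros Hng [Hm [Ls [HL Hcov]]]. split; [exact Hm|].
  exists (fun i h2 => Ls i (gone, h2)). split.
  - intros i Hi. destruct (HL i Hi) as [[A1 [A2 A3]] [Hp [s [Hs1 Hs2]]]].
    assert (Hsec : local_section f2 (fun h2 => Ls i (gone, h2))).
    { exists (fun h => snd (s (gone, h))). split.
      - intros x y Hx Hy. specialize (Hs1 (gone,x) (gone,y) Hx Hy).
        assert (E : @gmul (prod_group H1 H2) (gone,x) (gone,y) = (gone, gmul x y))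
          by (simpl; unfold pmul; simpl; now rewrite gmul1).
        rewrite E in Hs1. rewrite Hs1. reflexivity.
      - intros x Hx. specialize (Hs2 (gone,x) Hx). simpl in Hs2. unfold prod_fun in Hs2.
        injection Hs2; auto. }
    split; [|split; [|exact Hsec]].
    + split; [exact A1|split].
      * intros x y Hx Hy. specialize (A2 (gone,x) (gone,y) Hx Hy).
        simpl in A2; unfold pmul in A2; simpl in A2. now rewrite gmul1 in A2.
      * intros x Hx. specialize (A3 (gone,x) Hx). simpl in A3. now rewrite ginv1 in A3.
    + apply NNPP; intro Hn. apply Hng. destruct Hsec as [s' [B1 B2]].
      pose proof (not_proper_all _ _ Hn) as Hall.
      exists s'. split; intros; auto.
  - intros h2. destruct (Hcov (gone, h2)) as [i [Hi Hh]]. eauto.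
Qed.

Lemma part2 (G H K : group) (f : hom G H) m :
  sec_cover f m -> sec_cover (prod_hom f (id_hom K)) m.
Proof.
  intros [Hm [Ls [HL Hcov]]]. split; [exact Hm|].
  exists (fun i (p : prod_group H K) => Ls i (fst p)). split.
  - intros i Hi. destruct (HL i Hi) as [[A1 [A2 A3]] [Hp [s [Hs1 Hs2]]]].
    split; [|split].
    + split; [exact A1|split].
      * intros x y Hx Hy. exact (A2 _ _ Hx Hy).
      * intros x Hx. exact (A3 _ Hx).
    + destruct Hp as [h Hh]. exists (h, gone). exact Hh.
    + exists (fun p : prod_group H K => (s (fst p), snd p) : prod_group G K). split.
      * intros [x1 x2] [y1 y2] Hx Hy. simpl in *. unfold pmul. simpl.
        rewrite Hs1; auto.
      * intros [x1 x2] Hx. simpl in *. unfold prod_fun. simpl. rewrite Hs2; auto.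
  - intros [h k]. destruct (Hcov h) as [i [Hi Hh]]. eauto.
Qed.

Lemma ele_from (G H G' H' : group) (f : hom G H) (g : hom G' H') :
  (forall m, sec_cover g m -> sec_cover f m) -> ele (sec f) (sec g).
Proof.
  intros Himp. unfold sec at 2.
  destruct (excluded_middle_informative _) as [E|E]; [|destruct (sec f); exact I].
  destruct (constructive_indefinite_description _ _) as [k [Hk Hmin]]. simpl.
  apply sec_le. auto.
Qed.

Lemma ele_antisym a b : ele a b -> ele b a -> a = b.
Proof.
  destruct a, b; simpl; intros; try contradiction; auto. f_equal; lia.
Qed.

Theorem theorem3p4 :
  (forall (G1 H1 G2 H2 : group) (f1 : hom G1 H1) (f2 : hom G2 H2),
     (~ global_section f1 -> ele (sec f1) (sec (prod_hom f1 f2))) /\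
     (~ global_section f2 -> ele (sec f2) (sec (prod_hom f1 f2)))) /\
  (forall (G H K : group) (f : hom G H),
     ele (sec (prod_hom f (id_hom K))) (sec f) /\
     (~ global_section f -> sec (prod_hom f (id_hom K)) = sec f)).
Proof.
  split.
  - intros. split; intros Hn; apply ele_from; intros m.
    + apply part1a; auto.
    + apply part1b; auto.
  - intros. assert (A : ele (sec (prod_hom f (id_hom K))) (sec f))
      by (apply ele_from; intros m; apply part2).
    split; [exact A|]. intros Hn. apply ele_antisym; [exact A|].
    apply ele_from; intros m. apply part1a; auto.
Qed.
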